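(* The partial derivatives $(\omega_\pm)_x$ and $(\omega_\pm)_y$ are uniformly bounded on $R\setminus\{p_0\}$. For all $(x,y)\in R_\pm\setminus\{p_0\}$, $(\omega_\pm)_x(x,y)\ge 0$, with equality exactly when $y=0$. In any wedge $V_a$ (with $p_0$ removed), $(\omega_\pm)_x>1/120$. Furthermore, for $y\neq0$, $y\,(\omega_+)_y>0$ and $y\,(\omega_-)_y<0$.
   Context: For $x>0$, $y\in\mathbb{R}$ let $r_1^2=4+x^2+4x^2y^2$, $\Delta=((x+2)^2+8x^2y^2)((x-2)^2+8x^2y^2)$ and $$\omega_\pm(x,y)=\frac{x^2-4\pm\sqrt{\Delta}}{2r_1^2}.$$ Let $p_0=(2,0)$, $R=\{(x,y): x>0,\ 4-4y^2-x^2y^2-8x^2y^4\ge 0\}$, $R_+=R\cap((0,2]\times\mathbb{R})$, $R_-=R\cap([2,\infty)\times\mathbb{R})$. For $0<a\le 1/10$ the wedge of height $a$ is $V_a=\{(x,y): |y|\le a,\ |y|\ge|x-2|/10\}$. *)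

(* Defs.v *)
From Stdlib Require Import Reals Lra.
From Coquelicot Require Import Coquelicot.
Open Scope R_scope.

Definition r1sq (x y : R) : R := 4 + x^2 + 4 * x^2 * y^2.

Definition Delta (x y : R) : R :=
  ((x + 2)^2 + 8 * x^2 * y^2) * ((x - 2)^2 + 8 * x^2 * y^2).

Definition omega_plus (x y : R) : R := (x^2 - 4 + sqrt (Delta x y)) / (2 * r1sq x y).
Definition omega_minus (x y : R) : R := (x^2 - 4 - sqrt (Delta x y)) / (2 * r1sq x y).

(* partial derivatives (Coquelicot's total Derive; existence is stated separately) *)
Definition ex_partial_x (f : R -> R -> R) (x y : R) : Prop := ex_derive (fun t => f t y) x.
Definition ex_partial_y (f : R -> R -> R) (x y : R) : Prop := ex_derive (fun t => f x t) y.
Definition partial_x (f : R -> R -> R) (x y : R) : R := Derive (fun t => f t y) x.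
Definition partial_y (f : R -> R -> R) (x y : R) : R := Derive (fun t => f x t) y.

Definition is_p0 (x y : R) : Prop := x = 2 /\ y = 0.

Definition inR (x y : R) : Prop :=
  0 < x /\ 4 - 4 * y^2 - x^2 * y^2 - 8 * x^2 * y^4 >= 0.
Definition inRplus (x y : R) : Prop := inR x y /\ x <= 2.
Definition inRminus (x y : R) : Prop := inR x y /\ 2 <= x.

Definition inV (a x y : R) : Prop := Rabs y <= a /\ Rabs y >= Rabs (x - 2) / 10.

(* Main.v *)
From Pilot Require Import Defs.
From Stdlib Require Import Reals Lra Psatz.
From Coquelicot Require Import Coquelicot.
Open Scope R_scope.
Local Notation Delta := Pilot.Defs.Delta.

Lemma sq_pos (z : R) : z <> 0 -> 0 < z^2.
Proof. intro H. destruct (Rlt_or_le z 0); [nra|]. destruct H0; [nra| congruence]. Qed.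

Lemma Delta_nonneg x y : 0 <= Delta x y.
Proof. unfold Delta. pose proof (pow2_ge_0 (x+2)). pose proof (pow2_ge_0 (x-2)). pose proof (pow2_ge_0 (x*y)).
  apply Rmult_le_pos; nra. Qed.

Lemma Delta_pos x y : 0 < x -> ~ is_p0 x y -> 0 < Delta x y.
Proof.
  intros Hx Hp. unfold Delta. destruct (Req_dec y 0) as [Hy|Hy].
  - subst y. assert (x - 2 <> 0) by (intro; apply Hp; split; lra).
    assert (H2 := sq_pos _ H). pose proof (pow2_ge_0 (x+2)). apply Rmult_lt_0_compat; nra.
  - assert (H2 := sq_pos _ Hy). assert (0 < x^2) by nra. assert (0 < x^2*y^2) by nra.
    pose proof (pow2_ge_0 (x+2)). pose proof (pow2_ge_0 (x-2)).
    apply Rmult_lt_0_compat; nra.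
Qed.

Lemma r_pos x y : 0 < r1sq x y.
Proof. unfold r1sq. pose proof (pow2_ge_0 x). pose proof (pow2_ge_0 (x*y)). nra. Qed.

Lemma quad_plus x y : r1sq x y * (omega_plus x y)^2 - (x^2-4) * omega_plus x y - 4*x^2*y^2 = 0.
Proof.
  assert (HS := sqrt_sqrt _ (Delta_nonneg x y)). assert (Hr := r_pos x y).
  unfold omega_plus. set (S := sqrt (Delta x y)) in *.
  replace (r1sq x y * ((x ^ 2 - 4 + S) / (2 * r1sq x y)) ^ 2 -
    (x ^ 2 - 4) * ((x ^ 2 - 4 + S) / (2 * r1sq x y)) - 4 * x ^ 2 * y ^ 2)
   with ((S*S - Delta x y)/(4*r1sq x y)).
  - rewrite HS. unfold Rdiv. ring.
  - unfold Delta, r1sq in *. field. lra.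
Qed.

Lemma quad_minus x y : r1sq x y * (omega_minus x y)^2 - (x^2-4) * omega_minus x y - 4*x^2*y^2 = 0.
Proof.
  assert (HS := sqrt_sqrt _ (Delta_nonneg x y)). assert (Hr := r_pos x y).
  unfold omega_minus. set (S := sqrt (Delta x y)) in *.
  replace (r1sq x y * ((x ^ 2 - 4 - S) / (2 * r1sq x y)) ^ 2 -
    (x ^ 2 - 4) * ((x ^ 2 - 4 - S) / (2 * r1sq x y)) - 4 * x ^ 2 * y ^ 2)
   with ((S*S - Delta x y)/(4*r1sq x y)).
  - rewrite HS. unfold Rdiv. ring.
  - unfold Delta, r1sq in *. field. lra.
Qed.

Lemma exd_px x y : 0 < x -> ~ is_p0 x y -> ex_derive (fun t => omega_plus t y) x.
Proof.
  intros Hx Hp. assert (HD := Delta_pos x y Hx Hp). assert (Hr := r_pos x y).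
  unfold omega_plus, Delta, r1sq in *. auto_derive. repeat split; try lra.
Qed.

Lemma exd_mx x y : 0 < x -> ~ is_p0 x y -> ex_derive (fun t => omega_minus t y) x.
Proof.
  intros Hx Hp. assert (HD := Delta_pos x y Hx Hp). assert (Hr := r_pos x y).
  unfold omega_minus, Delta, r1sq in *. auto_derive. repeat split; try lra.
Qed.

Lemma exd_py x y : 0 < x -> ~ is_p0 x y -> ex_derive (fun t => omega_plus x t) y.
Proof.
  intros Hx Hp. assert (HD := Delta_pos x y Hx Hp). assert (Hr := r_pos x y).
  unfold omega_plus, Delta, r1sq in *. auto_derive. repeat split; try lra.
Qed.

Lemma exd_my x y : 0 < x -> ~ is_p0 x y -> ex_derive (fun t => omega_minus x t) y.
Proof.
  intros Hx Hp. assert (HD := Delta_pos x y Hx Hp). assert (Hr := r_pos x y).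
  unfold omega_minus, Delta, r1sq in *. auto_derive. repeat split; try lra.
Qed.

Lemma plus_R (a b : R) : plus a b = a + b. Proof. reflexivity. Qed.
Lemma implicit (w a b c : R -> R) (x da db dc : R) :
  (forall t, a t * (w t)^2 - b t * w t - c t = 0) -> ex_derive w x ->
  is_derive a x da -> is_derive b x db -> is_derive c x dc ->
  da * (w x)^2 + Derive w x * (2 * a x * w x - b x) - db * w x - dc = 0.
Proof.
  intros H Hw Ha Hb Hc.
  apply Derive_correct in Hw.
  assert (Hm := is_derive_minus _ _ _ _ _ (is_derive_minus _ _ _ _ _ (is_derive_mult _ _ _ _ _ Ha (is_derive_pow _ 2 _ _ Hw) Rmult_comm) (is_derive_mult _ _ _ _ _ Hb Hw Rmult_comm)) Hc).
  assert (H0 : is_derive (fun t => a t * (w t)^2 - b t * w t - c t) x 0).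
  { apply is_derive_ext with (f := fun _ => 0). intro t. rewrite H. reflexivity. apply (is_derive_const (V:=R_NormedModule) 0). }
  assert (E := eq_trans (eq_sym (is_derive_unique _ _ _ Hm)) (is_derive_unique _ _ _ H0)).
  unfold plus, mult, minus, opp in E; simpl in E.
  unfold plus in E; cbn in E. rewrite <- E. ring.
Qed.

Lemma F1p x y : 2 * r1sq x y * omega_plus x y - (x^2-4) = sqrt (Delta x y).
Proof. assert (Hr := r_pos x y). unfold omega_plus. field. lra. Qed.
Lemma F1m x y : 2 * r1sq x y * omega_minus x y - (x^2-4) = - sqrt (Delta x y).
Proof. assert (Hr := r_pos x y). unfold omega_minus. field. lra. Qed.

Lemma dpx x y : 0 < x -> ~ is_p0 x y ->
  partial_x omega_plus x y * sqrt (Delta x y) =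
  2*x*(1 - omega_plus x y)*((1+4*y^2)*omega_plus x y + 4*y^2).
Proof.
  intros Hx Hp.
  assert (E := implicit (fun t => omega_plus t y) (fun t => r1sq t y) (fun t => t^2-4) (fun t => 4*t^2*y^2) x (2*x+8*x*y^2) (2*x) (8*x*y^2) (fun t => quad_plus t y) (exd_px x y Hx Hp)).
  cbv beta in E. rewrite F1p in E. unfold partial_x.
  assert (Ha : is_derive (fun t => r1sq t y) x (2*x+8*x*y^2)) by (unfold r1sq; auto_derive; [auto|ring]).
  assert (Hb : is_derive (fun t => t^2-4) x (2*x)) by (auto_derive; [auto|ring]).
  assert (Hc : is_derive (fun t => 4*t^2*y^2) x (8*x*y^2)) by (auto_derive; [auto|ring]).
  specialize (E Ha Hb Hc). lra.
Qed.

Lemma dmx x y : 0 < x -> ~ is_p0 x y ->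
  partial_x omega_minus x y * sqrt (Delta x y) =
  2*x*(1 - omega_minus x y)*(- ((1+4*y^2)*omega_minus x y + 4*y^2)).
Proof.
  intros Hx Hp.
  assert (E := implicit (fun t => omega_minus t y) (fun t => r1sq t y) (fun t => t^2-4) (fun t => 4*t^2*y^2) x (2*x+8*x*y^2) (2*x) (8*x*y^2) (fun t => quad_minus t y) (exd_mx x y Hx Hp)).
  cbv beta in E. rewrite F1m in E. unfold partial_x.
  assert (Ha : is_derive (fun t => r1sq t y) x (2*x+8*x*y^2)) by (unfold r1sq; auto_derive; [auto|ring]).
  assert (Hb : is_derive (fun t => t^2-4) x (2*x)) by (auto_derive; [auto|ring]).
  assert (Hc : is_derive (fun t => 4*t^2*y^2) x (8*x*y^2)) by (auto_derive; [auto|ring]).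
  specialize (E Ha Hb Hc). lra.
Qed.

Lemma dpy x y : 0 < x -> ~ is_p0 x y ->
  partial_y omega_plus x y * sqrt (Delta x y) = 8*x^2*y*(1 - omega_plus x y ^2).
Proof.
  intros Hx Hp.
  assert (E := implicit (fun t => omega_plus x t) (fun t => r1sq x t) (fun t => x^2-4) (fun t => 4*x^2*t^2) y (8*x^2*y) 0 (8*x^2*y) (fun t => quad_plus x t) (exd_py x y Hx Hp)).
  cbv beta in E. rewrite F1p in E. unfold partial_y.
  assert (Ha : is_derive (fun t => r1sq x t) y (8*x^2*y)) by (unfold r1sq; auto_derive; [auto|ring]).
  assert (Hb : is_derive (fun t => x^2-4) y 0) by (auto_derive; [auto|ring]).
  assert (Hc : is_derive (fun t => 4*x^2*t^2) y (8*x^2*y)) by (auto_derive; [auto|ring]).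
  specialize (E Ha Hb Hc). lra.
Qed.

Lemma dmy x y : 0 < x -> ~ is_p0 x y ->
  partial_y omega_minus x y * sqrt (Delta x y) = 8*x^2*y*(omega_minus x y ^2 - 1).
Proof.
  intros Hx Hp.
  assert (E := implicit (fun t => omega_minus x t) (fun t => r1sq x t) (fun t => x^2-4) (fun t => 4*x^2*t^2) y (8*x^2*y) 0 (8*x^2*y) (fun t => quad_minus x t) (exd_my x y Hx Hp)).
  cbv beta in E. rewrite F1m in E. unfold partial_y.
  assert (Ha : is_derive (fun t => r1sq x t) y (8*x^2*y)) by (unfold r1sq; auto_derive; [auto|ring]).
  assert (Hb : is_derive (fun t => x^2-4) y 0) by (auto_derive; [auto|ring]).
  assert (Hc : is_derive (fun t => 4*x^2*t^2) y (8*x^2*y)) by (auto_derive; [auto|ring]).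
  specialize (E Ha Hb Hc). lra.
Qed.

Lemma core x y : 0 < x -> ~ is_p0 x y ->
  let S := sqrt (Delta x y) in let r := r1sq x y in
  let p := omega_plus x y in let m := omega_minus x y in let t := 4*y^2 in
  0 < S /\ S*S = Delta x y /\ 0 < r /\ 2*r*p = x^2-4+S /\ 2*r*m = x^2-4-S /\
  0 <= p < 1 /\ -1 < m <= 0 /\
  r * (((1+t)*p+t) + (-((1+t)*m+t))) = (1+t)*S /\
  r * (((1+t)*p+t) * (-((1+t)*m+t))) = 4*t /\
  0 <= (1+t)*p+t /\ 0 <= -((1+t)*m+t).
Proof.
  intros Hx Hp S r p m t.
  assert (HD := Delta_pos x y Hx Hp).
  assert (HS : S*S = Delta x y) by (apply sqrt_sqrt; lra).
  assert (HS0 : 0 < S) by (apply sqrt_lt_R0; lra).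
  assert (Hr : 0 < r) by apply r_pos.
  assert (Hr0 : r1sq x y <> 0) by (apply Rgt_not_eq, r_pos).
  assert (Hr1 : 4 + x^2 + 4*x^2*y^2 <> 0) by exact Hr0.
  assert (Ep : 2*r*p = x^2-4+S) by (unfold p, r, omega_plus; fold S; field; exact Hr0).
  assert (Em : 2*r*m = x^2-4-S) by (unfold m, r, omega_minus; fold S; field; exact Hr0).
  assert (Hr' : r = 4 + x^2 + 4*x^2*y^2) by reflexivity.
  assert (HDe : Delta x y = ((x + 2)^2 + 8 * x^2 * y^2) * ((x - 2)^2 + 8 * x^2 * y^2)) by reflexivity.
  pose proof (pow2_ge_0 x). pose proof (pow2_ge_0 (x*y)). pose proof (pow2_ge_0 y).
  assert (Hs : 0 <= x^2*y^2) by nra.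
  assert (Hx2 : 0 < x^2) by nra.
  assert (HAB : r * (((1+t)*p+t) * (-((1+t)*m+t))) = 4*t + (1+t)^2*(S*S - Delta x y)/(4*r)).
  { unfold p, m, omega_plus, omega_minus. fold S r. rewrite HDe, Hr'. unfold t. field. exact Hr1. }
  assert (Ht0 : t = 4*y^2) by reflexivity.
  clearbody S r p m t.
  rewrite HS in HAB. replace (Delta x y - Delta x y) with 0 in HAB by ring.
  replace ((1 + t) ^ 2 * 0 / (4 * r)) with 0 in HAB by (unfold Rdiv; ring). rewrite Rplus_0_r in HAB.
  assert (HApB : r * (((1+t)*p+t) + (-((1+t)*m+t))) = (1+t)*S) by nra.
  assert (Ht : 0 <= t) by (rewrite Ht0; nra).
  assert (HK : S < 12 + x^2 + 8*x^2*y^2).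
  { assert (S*S < (12 + x^2 + 8*x^2*y^2)*(12 + x^2 + 8*x^2*y^2)) by (rewrite HS, HDe; nra). nra. }
  assert (HL : S < 3*x^2 + 4 + 8*x^2*y^2).
  { assert (S*S < (3*x^2 + 4 + 8*x^2*y^2)*(3*x^2 + 4 + 8*x^2*y^2)) by (rewrite HS, HDe; nra). nra. }
  assert (HM : (x^2-4)*(x^2-4) <= S*S) by (rewrite HS, HDe; nra).
  assert (HM1 : 4 - x^2 <= S) by nra.
  assert (HM2 : x^2 - 4 <= S) by nra.
  assert (0 <= p) by nra. assert (p < 1) by nra. assert (-1 < m) by nra. assert (m <= 0) by nra.
  assert (Hsum : 0 <= ((1+t)*p+t) + (-((1+t)*m+t))) by nra.
  assert (Hprod : 0 <= ((1+t)*p+t) * (-((1+t)*m+t))) by nra.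
  repeat split; try lra; nra.
Qed.

Lemma abs_bound d S K c : 0 < S -> d*S = K -> K*K <= c*c*(S*S) -> 0 <= c -> Rabs d <= c.
Proof.
  intros HS HK Hb Hc. subst K.
  assert (d*d <= c*c).
  { apply (Rmult_le_reg_r (S*S)); [nra|]. nra. }
  apply Rabs_le; split; nra.
Qed.

Lemma Delta_lb x y : 0 <= x -> 8*x^4*y^2 <= Delta x y.
Proof. intro Hx0.
  change (Delta x y) with (((x + 2)^2 + 8 * x^2 * y^2) * ((x - 2)^2 + 8 * x^2 * y^2)).
  pose proof (pow2_ge_0 (x-2)). pose proof (pow2_ge_0 (x*y)). pose proof (pow2_ge_0 x).
  assert (x^2 <= (x+2)^2 + 8*x^2*y^2) by nra.
  assert (8*x^2*y^2 <= (x-2)^2 + 8*x^2*y^2) by nra.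
  assert (0 <= x^2) by nra. assert (0 <= 8*x^2*y^2) by nra.
  replace (8*x^4*y^2) with (x^2 * (8*x^2*y^2)) by ring.
  apply Rmult_le_compat; assumption.
Qed.

Lemma part1 x y : inR x y -> ~ is_p0 x y ->
  Rabs (partial_x omega_plus x y) <= 5 /\ Rabs (partial_y omega_plus x y) <= 5 /\
  Rabs (partial_x omega_minus x y) <= 5 /\ Rabs (partial_y omega_minus x y) <= 5.
Proof.
  intros [Hx HR] Hp.
  assert (E1 := dpx x y Hx Hp). assert (E2 := dpy x y Hx Hp).
  assert (E3 := dmx x y Hx Hp). assert (E4 := dmy x y Hx Hp).
  assert (HL := Delta_lb x y (Rlt_le _ _ Hx)).
  destruct (core x y Hx Hp) as (HS0 & HS & Hr & Ep & Em & [Hp0 Hp1] & [Hm0 Hm1] & HApB & HAB & HA & HB).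
  assert (Hr' : r1sq x y = 4 + x^2 + 4*x^2*y^2) by reflexivity.
  revert E1 E2 E3 E4 HS0 HS Hr Ep Em Hp0 Hp1 Hm0 Hm1 HApB HAB HA HB HL Hr'.
  generalize (partial_x omega_plus x y) (partial_y omega_plus x y)
    (partial_x omega_minus x y) (partial_y omega_minus x y)
    (r1sq x y) (omega_plus x y) (omega_minus x y).
  generalize (sqrt (Delta x y)). generalize (Delta x y).
  intros D S d1 d2 d3 d4 r p m E1 E2 E3 E4 HS0 HS Hr Ep Em Hp0 Hp1 Hm0 Hm1 HApB HAB HA HB HL Hr'.
  pose proof (pow2_ge_0 y). pose proof (pow2_ge_0 x).
  assert (Hy1 : y^2 <= 1).
  { assert (0 <= x^2*y^2) by nra. assert (0 <= x^2*y^4) by (replace (x^2*y^4) with ((x*y^2)^2) by ring; apply pow2_ge_0). nra. }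
  set (t := 4*y^2) in *. set (A := (1+t)*p+t) in *. set (B := -((1+t)*m+t)) in *.
  assert (Ht : 0 <= t <= 4) by (unfold t; lra).
  assert (0 <= r*B) by (apply Rmult_le_pos; lra).
  assert (0 <= r*A) by (apply Rmult_le_pos; lra).
  assert (HrA : r*A <= (1+t)*S) by lra.
  assert (HrB : r*B <= (1+t)*S) by lra.
  assert (Hr'' : r = 4 + x^2*(1+t)) by (rewrite Hr'; unfold t; ring).
  assert (Hc2 : 4*x*(1+t) <= 5*r).
  { rewrite Hr''. assert (0 <= (1+t)*(5*x-2)^2) by (apply Rmult_le_pos; [lra|apply pow2_ge_0]). nra. }
  assert (Hc1 : 2*x*(1+t) <= 5*r) by (assert (0 <= x*(1+t)) by (apply Rmult_le_pos; lra); lra).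
  assert (HSq : 64*x^4*y^2 <= 25*(S*S)) by nra.
  split; [|split; [|split]].
  - apply (abs_bound d1 S _ 5 HS0 E1); [|lra].
    assert (0 <= 2*x*(1-p)*A) by (apply Rmult_le_pos; [nra|lra]).
    assert (r*(2*x*(1-p)*A) <= r*(5*S)).
    { assert (0 <= x*(r*A)*p) by (repeat apply Rmult_le_pos; lra).
      assert (r*(2*x*(1-p)*A) <= 2*x*(r*A)) by lra.
      assert (2*x*(r*A) <= 2*x*((1+t)*S)) by (apply Rmult_le_compat_l; lra).
      assert ((2*x*(1+t))*S <= (5*r)*S) by (apply Rmult_le_compat_r; lra). nra. }
    assert (2*x*(1-p)*A <= 5*S) by (apply (Rmult_le_reg_l r); lra). nra.
  - apply (abs_bound d2 S _ 5 HS0 E2); [|lra].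
    assert (0 <= 1 - p^2 <= 1) by nra.
    replace (8 * x ^ 2 * y * (1 - p ^ 2) * (8 * x ^ 2 * y * (1 - p ^ 2))) with
      ((64*x^4*y^2)*((1-p^2)*(1-p^2))) by ring.
    assert ((1-p^2)*(1-p^2) <= 1) by nra.
    assert (0 <= x^4*y^2) by (replace (x^4*y^2) with ((x^2*y)^2) by ring; apply pow2_ge_0). nra.
  - apply (abs_bound d3 S _ 5 HS0 E3); [|lra].
    assert (0 <= 2*x*(1-m)*B) by (apply Rmult_le_pos; [nra|lra]).
    assert (r*(2*x*(1-m)*B) <= r*(5*S)).
    { assert (0 <= x*(r*B)*(m+1)) by (repeat apply Rmult_le_pos; lra).
      assert (r*(2*x*(1-m)*B) <= 4*x*(r*B)) by lra.
      assert (4*x*(r*B) <= 4*x*((1+t)*S)) by (apply Rmult_le_compat_l; lra).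
      assert ((4*x*(1+t))*S <= (5*r)*S) by (apply Rmult_le_compat_r; lra). nra. }
    assert (2*x*(1-m)*B <= 5*S) by (apply (Rmult_le_reg_l r); lra). nra.
  - apply (abs_bound d4 S _ 5 HS0 E4); [|lra].
    replace (8 * x ^ 2 * y * (m ^ 2 - 1) * (8 * x ^ 2 * y * (m ^ 2 - 1))) with
      ((64*x^4*y^2)*((1-m^2)*(1-m^2))) by ring.
    assert (0 <= 1 - m^2 <= 1) by nra.
    assert ((1-m^2)*(1-m^2) <= 1) by nra.
    assert (0 <= x^4*y^2) by (replace (x^4*y^2) with ((x^2*y)^2) by ring; apply pow2_ge_0). nra.
Qed.

Lemma part2 x y : inRplus x y -> ~ is_p0 x y ->
  0 <= partial_x omega_plus x y /\ (partial_x omega_plus x y = 0 <-> y = 0).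
Proof.
  intros [[Hx HR] Hx2] Hp.
  assert (E1 := dpx x y Hx Hp).
  destruct (core x y Hx Hp) as (HS0 & HS & Hr & Ep & Em & [Hp0 Hp1] & [Hm0 Hm1] & HApB & HAB & HA & HB).
  assert (HDe : Delta x y = ((x + 2)^2 + 8 * x^2 * y^2) * ((x - 2)^2 + 8 * x^2 * y^2)) by reflexivity.
  revert E1 HS0 HS Hr Ep Em Hp0 Hp1 Hm0 Hm1 HApB HAB HA HB HDe.
  generalize (partial_x omega_plus x y) (r1sq x y) (omega_plus x y) (omega_minus x y).
  generalize (sqrt (Delta x y)). generalize (Delta x y).
  intros D S d r p m E1 HS0 HS Hr Ep Em Hp0 Hp1 Hm0 Hm1 HApB HAB HA HB HDe.
  assert (HK : 0 <= 2*x*(1-p)*((1+4*y^2)*p+4*y^2)) by (apply Rmult_le_pos; [nra|lra]).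
  assert (Hd : 0 <= d).
  { destruct (Rlt_or_le d 0) as [H|H]; [|lra]. assert (d*S < 0) by nra. lra. }
  split; [exact Hd|]. split.
  - intro Hd0. subst d. destruct (Req_dec y 0) as [|Hy]; [assumption|exfalso].
    assert (Hy2 := sq_pos _ Hy).
    assert (HA' : (1+4*y^2)*p+4*y^2 <> 0).
    { intro HA0. rewrite HA0 in HAB. lra. }
    assert (0 < (1+4*y^2)*p+4*y^2) by lra.
    assert (0 < 2*x*(1-p)*((1+4*y^2)*p+4*y^2)) by (apply Rmult_lt_0_compat; [nra|lra]).
    lra.
  - intro Hy. subst y.
    assert (HSq : S = 4 - x^2).
    { assert ((S - (4-x^2))*(S + (4-x^2)) = 0) by (rewrite HDe in HS; nra).
      apply Rmult_integral in H. destruct H; nra. }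
    assert (p = 0) by nra. subst p.
    assert (d * S = 0) by (rewrite E1; ring). apply Rmult_integral in H. destruct H; lra.
Qed.

Lemma part3 x y : inRminus x y -> ~ is_p0 x y ->
  0 <= partial_x omega_minus x y /\ (partial_x omega_minus x y = 0 <-> y = 0).
Proof.
  intros [[Hx HR] Hx2] Hp.
  assert (E1 := dmx x y Hx Hp).
  destruct (core x y Hx Hp) as (HS0 & HS & Hr & Ep & Em & [Hp0 Hp1] & [Hm0 Hm1] & HApB & HAB & HA & HB).
  assert (HDe : Delta x y = ((x + 2)^2 + 8 * x^2 * y^2) * ((x - 2)^2 + 8 * x^2 * y^2)) by reflexivity.
  revert E1 HS0 HS Hr Ep Em Hp0 Hp1 Hm0 Hm1 HApB HAB HA HB HDe.
  generalize (partial_x omega_minus x y) (r1sq x y) (omega_plus x y) (omega_minus x y).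
  generalize (sqrt (Delta x y)). generalize (Delta x y).
  intros D S d r p m E1 HS0 HS Hr Ep Em Hp0 Hp1 Hm0 Hm1 HApB HAB HA HB HDe.
  assert (HK : 0 <= 2*x*(1-m)*(-((1+4*y^2)*m+4*y^2))) by (apply Rmult_le_pos; [nra|lra]).
  assert (Hd : 0 <= d).
  { destruct (Rlt_or_le d 0) as [H|H]; [|lra]. assert (d*S < 0) by nra. lra. }
  split; [exact Hd|]. split.
  - intro Hd0. subst d. destruct (Req_dec y 0) as [|Hy]; [assumption|exfalso].
    assert (Hy2 := sq_pos _ Hy).
    assert (HA' : -((1+4*y^2)*m+4*y^2) <> 0).
    { intro HA0. rewrite HA0 in HAB. lra. }
    assert (0 < -((1+4*y^2)*m+4*y^2)) by lra.
    assert (0 < 2*x*(1-m)*(-((1+4*y^2)*m+4*y^2))) by (apply Rmult_lt_0_compat; [nra|lra]).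
    lra.
  - intro Hy. subst y.
    assert (HSq : S = x^2 - 4).
    { assert ((S - (x^2-4))*(S + (x^2-4)) = 0) by (rewrite HDe in HS; nra).
      apply Rmult_integral in H. destruct H; nra. }
    assert (m = 0) by nra. subst m.
    assert (d * S = 0) by (rewrite E1; ring). apply Rmult_integral in H. destruct H; lra.
Qed.

Lemma part5 x y : 0 < x -> y <> 0 ->
  y * partial_y omega_plus x y > 0 /\ y * partial_y omega_minus x y < 0.
Proof.
  intros Hx Hy.
  assert (Hp : ~ is_p0 x y) by (intros [_ H]; auto).
  assert (E2 := dpy x y Hx Hp). assert (E4 := dmy x y Hx Hp).
  destruct (core x y Hx Hp) as (HS0 & HS & Hr & Ep & Em & [Hp0 Hp1] & [Hm0 Hm1] & HApB & HAB & HA & HB).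
  revert E2 E4 HS0 Hp0 Hp1 Hm0 Hm1.
  generalize (partial_y omega_plus x y) (partial_y omega_minus x y) (omega_plus x y) (omega_minus x y).
  generalize (sqrt (Delta x y)).
  intros S d2 d4 p m E2 E4 HS0 Hp0 Hp1 Hm0 Hm1.
  assert (Hy2 := sq_pos _ Hy). assert (0 < x^2) by nra. assert (0 < x^2*y^2) by nra.
  assert (0 < 1 - p^2) by nra. assert (0 < 1 - m^2) by nra.
  assert (G1 : (y*d2)*S = 8*(x^2*y^2)*(1-p^2)) by (rewrite Rmult_assoc, E2; ring).
  assert (G2 : (y*d4)*S = - (8*(x^2*y^2)*(1-m^2))) by (rewrite Rmult_assoc, E4; ring).
  assert (0 < 8*(x^2*y^2)*(1-p^2)) by (apply Rmult_lt_0_compat; lra).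
  assert (0 < 8*(x^2*y^2)*(1-m^2)) by (apply Rmult_lt_0_compat; lra).
  split.
  - destruct (Rlt_or_le 0 (y*d2)); [lra|]. assert ((y*d2)*S <= 0) by nra. lra.
  - destruct (Rlt_or_le (y*d4) 0); [lra|]. assert (0 <= (y*d4)*S) by nra. lra.
Qed.

Lemma wedge_ineq x y : 1 <= x <= 3 -> (x-2)^2 <= 100*y^2 -> 0 < y^2 <= 1/100 ->
  (1+4*y^2) * Delta x y < 480 * x * (4*y^2).
Proof.
  intros Hx Hxy Hy.
  change (Delta x y) with (((x + 2)^2 + 8 * x^2 * y^2) * ((x - 2)^2 + 8 * x^2 * y^2)).
  set (P := (x + 2)^2 + 8 * x^2 * y^2).
  assert (HP0 : 0 <= P) by (unfold P; pose proof (pow2_ge_0 (x+2)); pose proof (pow2_ge_0 (x*y)); nra).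
  assert (H1 : (x - 2)^2 + 8 * x^2 * y^2 <= (100 + 8*x^2)*y^2) by nra.
  assert (H2 : P * ((x - 2)^2 + 8 * x^2 * y^2) <= P * ((100 + 8*x^2)*y^2)) by (apply Rmult_le_compat_l; lra).
  assert (HP1 : P <= (108/100)*x^2+4*x+4) by (unfold P; nra).
  assert (H3 : (1+4*y^2)*P <= 104/100*((108/100)*x^2+4*x+4)).
  { apply Rmult_le_compat; lra. }
  assert (H4 : (1+4*y^2)*P*(100+8*x^2) <= 104/100*((108/100)*x^2+4*x+4)*(100+8*x^2)).
  { apply Rmult_le_compat_r; nra. }
  assert (H5 : 104/100*((108/100)*x^2+4*x+4)*(100+8*x^2) < 1920*x).
  { assert (0 <= (x-1)*(3-x)) by nra. nra. }
  assert (H6 : (1+4*y^2)*P*(100+8*x^2)*y^2 < 1920*x*y^2) by (apply Rmult_lt_compat_r; lra).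
  assert (H7 : (1+4*y^2)*(P * ((x - 2)^2 + 8 * x^2 * y^2)) <= (1+4*y^2)*(P * ((100 + 8*x^2)*y^2)))
    by (apply Rmult_le_compat_l; lra).
  nra.
Qed.

Lemma aux_p (u s D : R) : 1 <= u <= 9 -> 0 <= s <= 9/100 ->
  D = (u-4)^2 + 16*s*(u+4) + 64*s^2 -> D <= (8+4*s)*(8+4*s).
Proof. intros Hu Hs HD. subst D. nra. Qed.
Lemma sq_le (S K : R) : 0 <= S -> 0 <= K -> S*S <= K*K -> S <= K.
Proof. intros. nra. Qed.
Lemma aux_half (r p : R) : 0 < r -> 2*r*p <= r -> p <= 1/2.
Proof. intros. nra. Qed.

Lemma part4 a x y : 0 < a -> a <= 1/10 -> inV a x y -> ~ is_p0 x y ->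
  partial_x omega_plus x y > 1/120 /\ partial_x omega_minus x y > 1/120.
Proof.
  intros Ha Ha1 [Hya Hyx] Hp.
  pose proof (Rabs_pos y). pose proof (Rabs_pos (x-2)).
  assert (Hxa : Rabs (x-2) <= 10 * Rabs y) by lra.
  assert (Hxy : (x-2)^2 <= 100*y^2).
  { rewrite <- (pow2_abs (x-2)), <- (pow2_abs y).
    assert (Rabs (x-2) * Rabs (x-2) <= (10*Rabs y)*(10*Rabs y)) by (apply Rmult_le_compat; lra). nra. }
  assert (Hy1 : y^2 <= 1/100).
  { rewrite <- (pow2_abs y). assert (Rabs y * Rabs y <= 1/10 * (1/10)) by (apply Rmult_le_compat; lra). nra. }
  assert (Hx13 : 1 <= x <= 3).
  { assert (Rabs (x-2) <= 1) by lra. unfold Rabs in H1; destruct (Rcase_abs (x-2)); lra. }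
  assert (Hx : 0 < x) by lra.
  assert (Hy : y <> 0).
  { intro Hy0. subst y. apply Hp. split; [|reflexivity].
    rewrite Rabs_R0 in Hxa. assert (Rabs (x-2) = 0) by lra.
    apply Rabs_eq_0 in H1. lra. }
  assert (Hy2 := sq_pos _ Hy).
  assert (W := wedge_ineq x y Hx13 Hxy (conj Hy2 Hy1)).
  assert (E1 := dpx x y Hx Hp). assert (E3 := dmx x y Hx Hp).
  destruct (core x y Hx Hp) as (HS0 & HS & Hr & Ep & Em & [Hp0 Hp1] & [Hm0 Hm1] & HApB & HAB & HA & HB).
  assert (HDe : Delta x y = ((x + 2)^2 + 8 * x^2 * y^2) * ((x - 2)^2 + 8 * x^2 * y^2)) by reflexivity.
  assert (Hr' : r1sq x y = 4 + x^2 + 4*x^2*y^2) by reflexivity.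
  revert E1 E3 HS0 HS Hr Ep Em Hp0 Hp1 Hm0 Hm1 HApB HAB HA HB HDe Hr' W.
  generalize (partial_x omega_plus x y) (partial_x omega_minus x y) (r1sq x y) (omega_plus x y) (omega_minus x y).
  generalize (sqrt (Delta x y)). generalize (Delta x y).
  intros D S d1 d3 r p m E1 E3 HS0 HS Hr Ep Em Hp0 Hp1 Hm0 Hm1 HApB HAB HA HB HDe Hr' W.
  set (t := 4*y^2) in *. set (A := (1+t)*p+t) in *. set (B := -((1+t)*m+t)) in *.
  assert (Ht : 0 < t) by (unfold t; lra).
  assert (Hp2 : p <= 1/2).
  { assert (Hx9 : x^2 <= 9) by (replace (x^2) with (x*x) by ring; replace 9 with (3*3) by ring; apply Rmult_le_compat; lra).
    assert (Hx1 : 1 <= x^2) by (replace (x^2) with (x*x) by ring; replace 1 with (1*1) by ring; apply Rmult_le_compat; lra).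
    assert (Hs0 : 0 <= x^2*y^2) by (apply Rmult_le_pos; lra).
    assert (Hs : x^2*y^2 <= 9*(1/100)) by (apply Rmult_le_compat; lra).
    assert (HDe2 : D = (x^2-4)^2 + 16*(x^2*y^2)*(x^2+4) + 64*(x^2*y^2)^2) by (rewrite HDe; ring).
    assert (Hs' : x^2*y^2 <= 9/100) by lra.
    assert (HD9 := aux_p (x^2) (x^2*y^2) D (conj Hx1 Hx9) (conj Hs0 Hs') HDe2).
    assert (HSK : S <= 8 + 4*x^2*y^2) by (apply sq_le; lra).
    apply (aux_half r p); lra. }
  assert (HAS : 4*t <= A*((1+t)*S)).
  { rewrite <- HApB. assert (0 <= r*(A*A)) by (apply Rmult_le_pos; [lra|apply Rle_0_sqr]).
    replace (A * (r * (A + B))) with (r*(A*A) + r*(A*B)) by ring. lra. }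
  assert (HBS : 4*t <= B*((1+t)*S)).
  { rewrite <- HApB. assert (0 <= r*(B*B)) by (apply Rmult_le_pos; [lra|apply Rle_0_sqr]).
    replace (B * (r * (A + B))) with (r*(B*B) + r*(A*B)) by ring. lra. }
  assert (HDp : 0 < (1+t)*D) by nra.
  assert (0 < x*t) by nra.
  split.
  - assert (K1 : 4*x*t <= d1*((1+t)*D)).
    { rewrite <- HS. replace (d1 * ((1 + t) * (S * S))) with ((d1*S)*((1+t)*S)) by ring.
      rewrite E1. replace (2 * x * (1 - p) * A * ((1 + t) * S)) with (2*x*(1-p)*(A*((1+t)*S))) by ring.
      assert (0 <= x*(1-2*p)*(A*((1+t)*S))).
      { repeat apply Rmult_le_pos; lra. }
      assert (x*(4*t) <= x*(A*((1+t)*S))) by (apply Rmult_le_compat_l; lra). lra. }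
    destruct (Rlt_or_le (1/120) d1); [lra|].
    assert (d1*((1+t)*D) <= 1/120*((1+t)*D)) by (apply Rmult_le_compat_r; lra). lra.
  - assert (K1 : 4*x*t <= d3*((1+t)*D)).
    { rewrite <- HS. replace (d3 * ((1 + t) * (S * S))) with ((d3*S)*((1+t)*S)) by ring.
      rewrite E3. replace (2 * x * (1 - m) * B * ((1 + t) * S)) with (2*x*(1-m)*(B*((1+t)*S))) by ring.
      assert (0 <= x*(1-2*m)*(B*((1+t)*S))).
      { repeat apply Rmult_le_pos; lra. }
      assert (x*(4*t) <= x*(B*((1+t)*S))) by (apply Rmult_le_compat_l; lra). lra. }
    destruct (Rlt_or_le (1/120) d3); [lra|].
    assert (d3*((1+t)*D) <= 1/120*((1+t)*D)) by (apply Rmult_le_compat_r; lra). lra.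
Qed.

Theorem lemma4p2 :
  (* partial derivatives exist and are uniformly bounded on R \ {p0} *)
  (exists M : R, forall x y : R, inR x y -> ~ is_p0 x y ->
     ex_partial_x omega_plus x y /\ ex_partial_y omega_plus x y /\
     ex_partial_x omega_minus x y /\ ex_partial_y omega_minus x y /\
     Rabs (partial_x omega_plus x y) <= M /\ Rabs (partial_y omega_plus x y) <= M /\
     Rabs (partial_x omega_minus x y) <= M /\ Rabs (partial_y omega_minus x y) <= M)
  /\
  (* (omega_+)_x >= 0 on R_+ \ {p0}, with equality iff y = 0 *)
  (forall x y : R, inRplus x y -> ~ is_p0 x y ->
     0 <= partial_x omega_plus x y /\ (partial_x omega_plus x y = 0 <-> y = 0))
  /\
  (* (omega_-)_x >= 0 on R_- \ {p0}, with equality iff y = 0 *)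
  (forall x y : R, inRminus x y -> ~ is_p0 x y ->
     0 <= partial_x omega_minus x y /\ (partial_x omega_minus x y = 0 <-> y = 0))
  /\
  (* in every wedge V_a (p0 removed), (omega_+-)_x > 1/120 *)
  (forall a x y : R, 0 < a -> a <= 1/10 -> inV a x y -> ~ is_p0 x y ->
     partial_x omega_plus x y > 1/120 /\ partial_x omega_minus x y > 1/120)
  /\
  (* for y <> 0: y (omega_+)_y > 0 and y (omega_-)_y < 0 *)
  (forall x y : R, 0 < x -> y <> 0 ->
     y * partial_y omega_plus x y > 0 /\ y * partial_y omega_minus x y < 0).
Proof.
  split; [|split; [exact part2|split; [exact part3|split; [exact part4|exact part5]]]].
  exists 5. intros x y HR Hp.
  assert (Hx : 0 < x) by (destruct HR; assumption).
  destruct (part1 x y HR Hp) as (B1 & B2 & B3 & B4).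
  unfold ex_partial_x, ex_partial_y.
  repeat split; try assumption.
  - exact (exd_px x y Hx Hp).
  - exact (exd_py x y Hx Hp).
  - exact (exd_mx x y Hx Hp).
  - exact (exd_my x y Hx Hp).
Qed.
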